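(* Let $U$ be a finite nonempty set, $R$ an equivalence relation on $U$, and $M(R)$ the support matroid induced by $R$. For every $X\subseteq U$, $X$ is a closed set of $M(R)$ if and only if $X$ is an $R$-precise set.
   Context: For $x\in U$, $RN(x)=\{y\in U\mid xRy\}$; $R_{*}(X)=\{x\in U\mid RN(x)\subseteq X\}$ and $R^{*}(X)=\{x\in U\mid RN(x)\cap X\neq\emptyset\}$. A set $X\subseteq U$ is $R$-precise if $R^{*}(X)=R_{*}(X)$, and $R$-rough otherwise. Let $\mathbf{S}(R)=\{X\subseteq U\mid R^{*}(X)=U\}$. The support matroid $M(R)=(U,\mathbf{I}(R))$ is the matroid on $U$ whose independent sets $\mathbf{I}(R)$ are the subsets of inclusion-minimal members of $\mathbf{S}(R)$. For a matroid $(U,\mathbf{I})$, the rank is $r(X)=\max\{|I|\mid I\subseteq X, I\in\mathbf{I}\}$, the closure is $cl(X)=\{e\in U\mid r(X)=r(X\cup\{e\})\}$, and $X$ is closed if $cl(X)=X$. *)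

(* Defs.v *)
From mathcomp Require Import all_boot.
Set Implicit Arguments. Unset Strict Implicit. Unset Printing Implicit Defensive.

Section Support.
Variables (U : finType) (R : rel U).

Definition RN (x : U) : {set U} := [set y | R x y].
Definition lowerR (X : {set U}) : {set U} := [set x | RN x \subset X].
Definition upperR (X : {set U}) : {set U} := [set x | RN x :&: X != set0].
Definition R_precise (X : {set U}) : bool := upperR X == lowerR X.

Definition inS (X : {set U}) : bool := upperR X == [set: U].
Definition indep (I : {set U}) : bool :=
  [exists M : {set U}, minset inS M && (I \subset M)].

Definition mrank (X : {set U}) : nat :=
  \max_(I : {set U} | (I \subset X) && indep I) #|I|.
Definition mclosure (X : {set U}) : {set U} :=
  [set e | mrank X == mrank (e |: X)].
Definition mclosed (X : {set U}) : bool := mclosure X == X.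
End Support.

(* Main.v *)
Require Import Defs.
From mathcomp Require Import all_boot.

Section Proof.
Variables (U : finType) (R : rel U).
Hypotheses (Rrefl : reflexive R) (Rsym : symmetric R) (Rtrans : transitive R).

Lemma tr {x y z} : R x y -> R y z -> R x z.
Proof. by move=> H1 H2; exact: Rtrans H1 H2. Qed.

Definition rk (x : U) : nat := enum_rank x.

Lemma rk_inj x y : rk x = rk y -> x = y.
Proof. by move=> /val_inj /enum_rank_inj. Qed.

Lemma exmin (P : pred U) x : P x -> exists y, P y /\ forall z, P z -> rk y <= rk z.
Proof.
move=> Px; case: (arg_minnP rk Px) => y Py H; exists y; split => //.
Qed.

Definition cinj (I : {set U}) := forall x y, x \in I -> y \in I -> R x y -> x = y.

Lemma RNE x y : R x y -> RN R x = RN R y.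
Proof.
move=> Rxy; apply/setP => z; rewrite !inE; apply/idP/idP => H.
  by apply: tr H; rewrite Rsym.
by apply: tr H.
Qed.

Lemma one_minset M : inS R M -> cinj M -> minset (inS R) M.
Proof.
move=> SM iM; apply/minsetP; split => // B SB sBM.
apply/eqP; rewrite eqEsubset sBM /=; apply/subsetP => x xM.
move: SB => /eqP /setP /(_ x); rewrite !inE => /set0Pn [b].
rewrite !inE => /andP [Rxb bB].
by rewrite (iM x b xM (subsetP sBM _ bB) Rxb).
Qed.

Lemma indep_cinj {I} : indep R I -> cinj I.
Proof.
move=> /existsP [M /andP [/minsetP [SM minM] sIM]] x y xI yI Rxy.
apply/eqP; apply/negPn/negP => nxy.
have SB : inS R (M :\ x).
  apply/eqP/setP => z; rewrite !inE; move: SM => /eqP /setP /(_ z).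
  rewrite !inE => /set0Pn [m]; rewrite !inE => /andP [Rzm mM].
  apply/set0Pn; case: (eqVneq m x) => [emx|nmx].
    exists y; rewrite !inE (subsetP sIM _ yI) andbT.
    rewrite eq_sym nxy /=; rewrite emx in Rzm; by rewrite andbT; exact: tr Rzm Rxy.
  by exists m; rewrite !inE Rzm nmx mM.
have := minM _ SB (subsetDl _ _) => /setP /(_ x); by rewrite !inE eqxx (subsetP sIM _ xI).
Qed.

Lemma cinj_indep {I} : cinj I -> indep R I.
Proof.
move=> iI.
pose M := [set x | if [exists y, R x y && (y \in I)] then x \in I
                   else [forall z, R x z ==> (rk x <= rk z)]].
apply/existsP; exists M; apply/andP; split; last first.
  apply/subsetP => x xI; rewrite inE.
  by case: ifP => // /existsP []; exists x; rewrite Rrefl xI.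
apply: one_minset.
  apply/eqP/setP => z; rewrite !inE; apply/set0Pn.
  case: (boolP [exists y, R z y && (y \in I)]) => [/existsP [y /andP [Rzy yI]]|nE].
    exists y; rewrite !inE Rzy /=.
    case: ifP => // /existsP []; exists y; by rewrite Rrefl yI.
  have [y [Rzy Hy]] := @exmin (R z) z (Rrefl z).
  exists y; rewrite !inE Rzy /=.
  case: ifP => [/existsP [w /andP [Ryw wI]]|_].
    by move: nE => /existsP []; exists w; rewrite wI (tr Rzy Ryw).
  apply/forallP => w; apply/implyP => Ryw; apply: Hy; exact: tr Rzy Ryw.
move=> x y; rewrite !inE => xM yM Rxy.
case: ifP xM => [_ xI|nEx].
  case: ifP yM => [_ yI|nEy _]; first exact: iI.
  by move: nEy => /existsP []; exists x; rewrite xI Rsym Rxy.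
case: ifP yM => [_ yI _|_ /forallP Hy /forallP Hx].
  by move: nEx => /existsP []; exists y; rewrite yI Rxy.
apply: rk_inj; apply/eqP; rewrite eqn_leq.
rewrite (implyP (Hx y) Rxy) (implyP (Hy x)) //; by rewrite Rsym.
Qed.

Lemma cinj_card {I} : cinj I -> #|RN R @: I| = #|I|.
Proof.
move=> iI; apply: card_in_imset => x y xI yI eRN.
apply: iI => //; have : y \in RN R y by rewrite inE Rrefl.
by rewrite -eRN inE.
Qed.

Lemma mrankE X : mrank R X = #|RN R @: X|.
Proof.
apply/eqP; rewrite eqn_leq; apply/andP; split.
  apply/bigmax_leqP => I /andP [sIX iI].
  rewrite -(cinj_card (indep_cinj iI)); apply: subset_leq_card; exact: imsetS.
pose I := [set x in X | [forall y, ((y \in X) && R x y) ==> (rk x <= rk y)]].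
have iI : cinj I.
  move=> x y; rewrite !inE => /andP [xX /forallP Hx] /andP [yX /forallP Hy] Rxy.
  apply: rk_inj; apply/eqP; rewrite eqn_leq (implyP (Hx y)) ?yX ?Rxy //.
  by rewrite (implyP (Hy x)) // xX Rsym Rxy.
have -> : RN R @: X = RN R @: I.
  apply/eqP; rewrite eqEsubset; apply/andP; split; last first.
    by apply: imsetS; apply/subsetP => x; rewrite inE => /andP [].
  apply/subsetP => C /imsetP [x xX ->].
  have Px : (x \in X) && R x x by rewrite xX Rrefl.
  have [y [/andP [yX Rxy] Hy]] := @exmin (fun y => (y \in X) && R x y) x Px.
  apply/imsetP; exists y; last exact: RNE.
  rewrite inE yX /=; apply/forallP => z; apply/implyP => /andP [zX Ryz].
  by apply: Hy; rewrite zX (tr Rxy Ryz).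
rewrite (cinj_card iI).
rewrite /mrank; apply: (leq_bigmax_cond (F := fun I0 : {set U} => #|I0|) I).
by rewrite cinj_indep // andbT; apply/subsetP => x; rewrite inE => /andP [].
Qed.

Lemma closureE X : mclosure R X = upperR R X.
Proof.
apply/setP => e; rewrite !inE !mrankE imsetU1 cardsU1.
have -> : (#|RN R @: X| == (RN R e \notin RN R @: X) + #|RN R @: X|) = (RN R e \in RN R @: X).
  by case: (RN R e \in RN R @: X); rewrite /= ?add0n ?eqxx // -{1}(add0n #|_|) eqn_add2r.
apply/imsetP/set0Pn => [[x xX ->]|[y]].
  by exists x; rewrite !inE Rrefl xX.
by rewrite !inE => /andP [Rey yX]; exists y => //; exact: RNE.
Qed.

End Proof.

Theorem corollary4 (U : finType) (R : rel U)
  (hU : 0 < #|U|)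
  (Rrefl : reflexive R) (Rsym : symmetric R) (Rtrans : transitive R) :
  forall X : {set U}, mclosed R X <-> R_precise R X.
Proof.
move=> X; rewrite /mclosed /R_precise (@closureE U R Rrefl Rsym Rtrans X).
have sXu : X \subset upperR R X.
  by apply/subsetP => x xX; rewrite inE; apply/set0Pn; exists x; rewrite !inE Rrefl.
have slX : lowerR R X \subset X.
  by apply/subsetP => x; rewrite inE => /subsetP; apply; rewrite inE Rrefl.
split => /eqP E.
  rewrite E eqEsubset slX andbT; apply/subsetP => x xX; rewrite inE; apply/subsetP => y; rewrite inE => Rxy.
  rewrite -E inE; apply/set0Pn; exists x; by rewrite !inE Rsym Rxy xX.
by rewrite eqEsubset sXu andbT E.
Qed.
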